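(* Let ancillae $A_1,\dots,A_n$ consecutively measure a $d$-dimensional quantum system $Q$ (prepared in a pure state, or unprepared and purified by a reference $R$), and let each ancilla $A_k$ be amplified by a detector $D_k$. Then for all $1\le i$, $j\le n$ with $j\ge i+2$, the detectors $D_i$ and $D_j$ share no entropy given the intermediate detectors: $$S(D_i:D_j\,|\,D_{i+1}\cdots D_{j-1})=0,$$ where $S(D_i:D_j|D_{i+1}\cdots D_{j-1})=S(D_j|D_{j-1}\cdots D_{i+1})-S(D_j|D_{j-1}\cdots D_i)$.
   Context: Setting: $Q$ is $d$-dimensional; either prepared in $|Q\rangle=\sum_{x_1}\alpha^{(1)}_{x_1}|\widetilde{x}_1\rangle$, or unprepared, i.e. in $|QR\rangle=d^{-1/2}\sum_x|\widetilde{x}\rangle|x\rangle$ with a reference $R$. Ancilla $A_k$ measures $Q$ in the orthonormal basis $\{|\widetilde{x}_k\rangle\}$, with $U^{(k)}_{x_{k-1}x_k}=\langle\widetilde{x}_k|\widetilde{x}_{k-1}\rangle$ unitary; the measurement is the unitary $\sum_x|\widetilde{x}_k\rangle\langle\widetilde{x}_k|\otimes U_x$ with $U_x|0\rangle=|x\rangle$ on $Q$ and the $d$-dimensional ancilla (initially $|0\rangle$, basis $\{|x\rangle\}$), performed consecutively for $k=1,\dots,n$. Amplification: detector $D_k$ copies $A_k$'s basis state, $|x\rangle_{A_k}|0\rangle_{D_k}\mapsto|x\rangle_{A_k}|x\rangle_{D_k}$. Entropies are von Neumann entropies (log base $d$) of reduced states of the global pure state; $S(X|Y)=S(XY)-S(Y)$.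 *)

(* Defs.v *)
From HB Require Import structures.
From mathcomp Require Import all_boot all_order all_algebra.
From mathcomp Require Import spectral.
From mathcomp Require Import reals exp complex.
Set Implicit Arguments.
Unset Strict Implicit.
Unset Printing Implicit Defensive.
Import Order.TTheory GRing.Theory Num.Theory.
Local Open Scope ring_scope.

(* Every subsystem is d-dimensional (computational basis 'I_d).  A global    *)
(* system is described by a finite type Sys of subsystem labels; a          *)
(* configuration (computational basis vector of the global Hilbert space)    *)
(* is a function Sys -> 'I_d, and a (pure) state vector is a function        *)
(* from configurations to amplitudes.                                        *)

Section VonNeumann.
Variable R : realType.
Local Notation C := R[i].

(* eigenvalues (with multiplicity) of a square complex matrix: the roots of
   its characteristic polynomial, which splits since C is algebraically closed *)
Definition eigs (m : nat) (M : 'M[C]_m) : seq C :=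
  sval (closed_field_poly_normal (char_poly M)).

(* x log_d x, with the convention 0 log 0 = 0 *)
Definition xlogd (d : nat) (x : R) : R :=
  if x == 0 then 0 else x * (ln x / ln (d%:R)).

Definition vN_entropy (d m : nat) (rho : 'M[C]_m) : R :=
  - \sum_(l <- eigs rho) xlogd d (complex.Re l).

End VonNeumann.

Section Systems.
Variable R : realType.
Local Notation C := R[i].
Variable d : nat.
Variable Sys : finType.

Definition cfg := {ffun Sys -> 'I_d}.
Definition state := cfg -> C.

Definition subcfg (S : {set Sys}) := {ffun {x : Sys | x \in S} -> 'I_d}.

Definition glue (S : {set Sys}) (a : subcfg S) (c : subcfg (~: S)) : cfg :=
  [ffun s => match boolP (s \in S) with
             | AltTrue h => a (exist _ s h)
             | AltFalse h => c (exist _ s (etrans (in_setC s S) h))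
             end].

(* reduced density matrix of the pure state psi on the subsystems S
   (partial trace over the complement of S), written in the basis of
   subcfg S enumerated by enum_val *)
Definition rdm (psi : state) (S : {set Sys}) : 'M[C]_#|{: subcfg S}| :=
  \matrix_(a, b) \sum_(c : subcfg (~: S))
      psi (glue (enum_val a) c) * (psi (glue (enum_val b) c))^*.

Definition ent (psi : state) (S : {set Sys}) : R := vN_entropy d (rdm psi S).

Definition condEnt (psi : state) (X Y : {set Sys}) : R :=
  ent psi (X :|: Y) - ent psi Y.

Definition condMI (psi : state) (X Y Z : {set Sys}) : R :=
  condEnt psi Y Z - condEnt psi Y (X :|: Z).

Definition upd (c : cfg) (s : Sys) (v : 'I_d) : cfg :=
  [ffun t => if t == s then v else c t].

(* apply an operator on the two (distinct) subsystems s1 s2, given by its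
   matrix elements M a b a' b' = <a b| M |a' b'> *)
Definition apply2 (s1 s2 : Sys) (M : 'I_d -> 'I_d -> 'I_d -> 'I_d -> C)
  (psi : state) : state :=
  fun c => \sum_(a' : 'I_d) \sum_(b' : 'I_d)
            M (c s1) (c s2) a' b' * psi (upd (upd c s1 a') s2 b').

(* the measurement unitary  sum_x |x~><x~|_Q (x) U_x  on Q and an ancilla,
   where row x of Bk is the basis vector |x~> (Bk x q = <q|x~>) *)
Definition measOp (Bk : 'M[C]_d) (U : 'I_d -> 'M[C]_d) :
  'I_d -> 'I_d -> 'I_d -> 'I_d -> C :=
  fun q a q' a' => \sum_(x : 'I_d) Bk x q * (Bk x q')^* * U x a a'.

Definition pairOp (V : 'M[C]_(d * d)) : 'I_d -> 'I_d -> 'I_d -> 'I_d -> C :=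
  fun a b a' b' => V (mxvec_index a b) (mxvec_index a' b').

(* consecutive measurements k = 1..n of Q by A_k (basis B k), each ancilla
   A_k being amplified by detector D_k right after its measurement *)
Definition evolve (n : nat) (Q : Sys) (A D : 'I_n -> Sys)
  (B : nat -> 'M[C]_d) (U : 'I_d -> 'M[C]_d) (V : 'M[C]_(d * d))
  (psi0 : state) : state :=
  foldl (fun psi (k : 'I_n) =>
           apply2 (A k) (D k) (pairOp V) (apply2 Q (A k) (measOp (B k.+1) U) psi))
        psi0 (enum 'I_n).

End Systems.

(* Prepared:   systems Q, A_1..A_n, D_1..D_n   (label type unit + (I_n+I_n)) *)
(* Unprepared: systems Q, R, A_1..A_n, D_1..D_n (label type bool + (I_n+I_n))*)
(* Ancilla / detector number k+1 of the paper is labelled by k : 'I_n.       *)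

Definition SysP (n : nat) : finType := (unit + ('I_n + 'I_n))%type.
Definition QP {n} : SysP n := inl tt.
Definition AP {n} (k : 'I_n) : SysP n := inr (inl k).
Definition DP {n} (k : 'I_n) : SysP n := inr (inr k).

Definition SysU (n : nat) : finType := (bool + ('I_n + 'I_n))%type.
Definition QU {n} : SysU n := inl false.
Definition RU {n} : SysU n := inl true.
Definition AU {n} (k : 'I_n) : SysU n := inr (inl k).
Definition DU {n} (k : 'I_n) : SysU n := inr (inr k).

Section Settings.
Variable R : realType.
Local Notation C := R[i].
Variables (d n : nat) (hd : (0 < d)%N).
Local Notation z := (Ordinal hd).
Variables (B : nat -> 'M[C]_d) (U : 'I_d -> 'M[C]_d) (V : 'M[C]_(d * d)).

(* initial state |Q> (x) |0..0>_A (x) |0..0>_D, |Q> = sum_x alpha_x |x~_1> *)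
Definition init_prepared (alpha : 'I_d -> C) : state R d (SysP n) :=
  fun c => (\sum_(x : 'I_d) alpha x * B 1 x (c QP)) *
           [forall k : 'I_n, (c (AP k) == z) && (c (DP k) == z)]%:R.

(* initial state d^{-1/2} sum_x |x~_1>_Q |x>_R (x) |0..0>_A (x) |0..0>_D *)
Definition init_unprepared : state R d (SysU n) :=
  fun c => (sqrtC (d%:R : C))^-1 *
           (\sum_(x : 'I_d) B 1 x (c QU) * (c RU == x)%:R) *
           [forall k : 'I_n, (c (AU k) == z) && (c (DU k) == z)]%:R.

Definition final_prepared (alpha : 'I_d -> C) : state R d (SysP n) :=
  evolve QP AP DP B U V (init_prepared alpha).

Definition final_unprepared : state R d (SysU n) :=
  evolve QU AU DU B U V init_unprepared.

End Settings.

(* Main.v *)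
Require Import Defs.
From HB Require Import structures.
From mathcomp Require Import all_boot all_order all_algebra.
From mathcomp Require Import spectral.
From mathcomp Require Import reals exp complex.
From mathcomp Require Import ring lra.
Import Order.TTheory GRing.Theory Num.Theory.
Local Open Scope ring_scope.
Set Implicit Arguments.
Unset Strict Implicit.
Unset Printing Implicit Defensive.
Section PartA.
Variable R : realType.
Local Notation C := R[i].

Lemma eigs_diag (m : nat) (M : 'M[C]_m) : is_diag_mx M ->
  perm_eq (eigs M) [seq M i i | i <- enum 'I_m].
Proof.
move=> dM; apply: prod_XsubC_eq.
rewrite /eigs; case: (closed_field_poly_normal _) => r /= Hr.
have := char_poly_monic M; rewrite qualifE => /eqP hl.
rewrite hl scale1r in Hr; rewrite -Hr char_poly_trig ?is_diag_mx_is_trig //.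
by rewrite big_map big_enum.
Qed.

Lemma vN_diag (d m : nat) (M : 'M[C]_m) : is_diag_mx M ->
  vN_entropy d M = - \sum_(i < m) xlogd d (complex.Re (M i i)).
Proof.
move=> dM; rewrite /vN_entropy (perm_big _ (eigs_diag dM)) big_map big_enum //.
Qed.
End PartA.
Section PartB.
Variable R : realType.
Local Notation C := R[i].
Variable d : nat.
Variable Sys : finType.
Local Notation cfg := (cfg d Sys).
Local Notation subcfg := (subcfg d).

Lemma glue_in (S : {set Sys}) (a : subcfg S) (c : subcfg (~: S)) s (h : s \in S) :
  glue a c s = a (exist _ s h).
Proof.
rewrite /glue ffunE; destruct (boolP (s \in S)) as [h'|h'].
  by congr (a _); apply: val_inj.
exfalso; by move: (h'); rewrite h.
Qed.

Lemma glue_out (S : {set Sys}) (a : subcfg S) (c : subcfg (~: S)) s (h : s \in ~: S) :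
  glue a c s = c (exist _ s h).
Proof.
rewrite /glue ffunE; destruct (boolP (s \in S)) as [h'|h'].
  exfalso; by move: (h); rewrite in_setC h'.
by congr (c _); apply: val_inj.
Qed.

Definition res (S : {set Sys}) (c : cfg) : subcfg S := [ffun x => c (val x)].

Lemma res_glue1 (S : {set Sys}) (a : subcfg S) (c : subcfg (~: S)) : res S (glue a c) = a.
Proof. by apply/ffunP => -[s h]; rewrite ffunE /= glue_in. Qed.

Lemma res_glue2 (S : {set Sys}) (a : subcfg S) (c : subcfg (~: S)) : res (~: S) (glue a c) = c.
Proof. by apply/ffunP => -[s h]; rewrite ffunE /= glue_out. Qed.

Lemma glue_res (S : {set Sys}) (c : cfg) : glue (res S c) (res (~: S) c) = c.
Proof.
apply/ffunP => s; case: (boolP (s \in S)) => h.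
  by rewrite glue_in ffunE.
have h' : s \in ~: S by rewrite in_setC.
by rewrite glue_out ffunE.
Qed.

Lemma sum_glue (S : {set Sys}) (F : cfg -> R) :
  \sum_(c : cfg) F c = \sum_(a : subcfg S) \sum_(b : subcfg (~: S)) F (glue a b).
Proof.
rewrite pair_big /=.
rewrite (reindex (fun p : subcfg S * subcfg (~: S) => glue p.1 p.2)) //=.
apply: onW_bij; exists (fun c => (res S c, res (~: S) c)).
  by move=> [a b] /=; rewrite res_glue1 res_glue2.
by move=> c /=; rewrite glue_res.
Qed.

Definition nn (z : C) : R := complex.Re (z * z^*).

Lemma Re_sum (I : Type) (r : seq I) (P : pred I) (F : I -> C) :
  complex.Re (\sum_(i <- r | P i) F i) = \sum_(i <- r | P i) complex.Re (F i).
Proof.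
apply: (big_morph (@complex.Re R)) => //.
by move=> [a b] [c e].
Qed.

Lemma nn_ge0 z : 0 <= nn z.
Proof.
rewrite /nn -normCK.
have : (0 : C) <= `|z| ^+ 2 by rewrite exprn_ge0.
by rewrite lecE => /andP [].
Qed.

Definition agree (S : {set Sys}) (c c' : cfg) : bool := [forall s in S, c s == c' s].

Definition Mg (P : cfg -> R) (S : {set Sys}) (c : cfg) : R :=
  \sum_(c' : cfg) (agree S c c')%:R * P c'.

Definition Hs (P : cfg -> R) (S : {set Sys}) : R :=
  - \sum_(c : cfg) P c * (ln (Mg P S c) / ln (d%:R : R)).

Lemma xlogdE x : xlogd d x = x * (ln x / ln (d%:R : R)).
Proof. by rewrite /xlogd; case: eqP => [->|]; rewrite ?mul0r. Qed.

Lemma res_eq_agree (S : {set Sys}) c c' : (res S c' == res S c) = agree S c c'.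
Proof.
apply/eqP/forall_inP => [H s hs|H].
  have := congr1 (fun f : subcfg S => f (exist _ s hs)) H.
  by rewrite !ffunE /= => ->.
by apply/ffunP => -[s hs]; rewrite !ffunE /=; rewrite (eqP (H s hs)).
Qed.

Lemma ent_classical (psi : state R d Sys) (S : {set Sys}) :
  (forall s, s \in S -> exists t, t \notin S /\ forall c, psi c != 0 -> c s = c t) ->
  ent psi S = Hs (fun c => nn (psi c)) S.
Proof.
move=> twin.
have diag : is_diag_mx (rdm psi S).
  apply/is_diag_mxP => a b neq; rewrite mxE; apply: big1 => c2 _.
  have : enum_val a != enum_val b.
    by apply: contra neq => /eqP /enum_val_inj ->.
  move=> H; have : [exists x, enum_val a x != enum_val b x].
    rewrite -negb_forall; apply: contra H => /forallP e.
    by apply/eqP/ffunP => x; apply/eqP/e.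
  case/existsP => -[s hs] /= hne.
  have [t [ht Ht]] := twin s hs.
  have ht' : t \in ~: S by rewrite in_setC.
  case: (eqVneq (psi (glue (enum_val a) c2)) 0) => [->|pa]; first by rewrite mul0r.
  case: (eqVneq (psi (glue (enum_val b) c2)) 0) => [->|pb].
    by rewrite conjC0 mulr0.
  have := Ht _ pa; have := Ht _ pb.
  rewrite !(glue_in _ _ hs) !(glue_out _ _ ht') => ea eb.
  by move: hne; rewrite eb ea eqxx.
rewrite /ent vN_diag // /Hs.
under eq_bigr => a _ do rewrite mxE.
rewrite -(big_enum_val (A := {: subcfg S}) (fun a : subcfg S =>
    xlogd d (complex.Re (\sum_(c : subcfg (~: S)) psi (glue a c) * (psi (glue a c))^*)))) /=.
congr (- _).
rewrite (sum_glue S); apply: eq_bigr => a _.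
rewrite Re_sum xlogdE mulr_suml; apply: eq_bigr => b _.
congr (_ * (ln _ / _)).
rewrite /Mg (sum_glue S) [in RHS](bigD1 a) //= [X in _ + X]big1 ?addr0.
  apply: eq_bigr => b' _; rewrite -res_eq_agree !res_glue1 eqxx mul1r.
  by [].
move=> a' ne; apply: big1 => b' _.
by rewrite -res_eq_agree !res_glue1 (negbTE ne) mul0r.
Qed.

Lemma Mg_ge (P : cfg -> R) S c : (forall c, 0 <= P c) -> P c <= Mg P S c.
Proof.
move=> P0; rewrite /Mg (bigD1 c) //=.
have -> : agree S c c by apply/forall_inP.
rewrite mul1r lerDl; apply: sumr_ge0 => c' _.
by rewrite mulr_ge0 ?ler0n.
Qed.

Lemma cmi_classical (P : cfg -> R) (X Y Z : {set Sys}) :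
  (forall c, 0 <= P c) ->
  (forall c, Mg P Z c * Mg P (Y :|: (X :|: Z)) c = Mg P (Y :|: Z) c * Mg P (X :|: Z) c) ->
  (Hs P (Y :|: Z) - Hs P Z) - (Hs P (Y :|: (X :|: Z)) - Hs P (X :|: Z)) = 0.
Proof.
move=> P0 HM.
set L := fun x : R => ln x / ln (d%:R : R).
have key : forall c, P c * L (Mg P Z c) + P c * L (Mg P (Y :|: (X :|: Z)) c)
    = P c * L (Mg P (Y :|: Z) c) + P c * L (Mg P (X :|: Z) c).
  move=> c; case: (eqVneq (P c) 0) => [->|pn]; first by rewrite !mul0r addr0.
  have pp : 0 < P c by rewrite lt0r pn P0.
  have mp : forall S, Mg P S c \is Num.pos.
    by move=> S; rewrite posrE (lt_le_trans pp) // Mg_ge.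
  rewrite -!mulrDr /L -!mulrDl -!lnM ?mp // HM.
  done.
have E : \sum_c P c * L (Mg P Z c) + \sum_c P c * L (Mg P (Y :|: (X :|: Z)) c)
   = \sum_c P c * L (Mg P (Y :|: Z) c) + \sum_c P c * L (Mg P (X :|: Z) c).
  by rewrite -!big_split /=; apply: eq_bigr => c _; rewrite key.
rewrite /Hs -/L.
move: E.
set a := \sum_c _. set b := \sum_c _. set e := \sum_c _. set f := \sum_c _.
move=> E.
lra.
Qed.

Definition dep (S : {set Sys}) (f : cfg -> R) :=
  forall c c' : cfg, (forall s, s \in S -> c s = c' s) -> f c = f c'.

Definition mix (T : {set Sys}) (c1 c2 : cfg) : cfg :=
  [ffun s => if s \in T then c1 s else c2 s].

Lemma mixK T c1 c2 : mix T (mix T c1 c2) (mix T c2 c1) = c1.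
Proof. by apply/ffunP => s; rewrite !ffunE; case: (s \in T). Qed.

Lemma sum_mix (T : {set Sys}) (F H : cfg -> R) :
  dep T F -> dep (~: T) H ->
  (\sum_c F c * H c) * #|{: cfg}|%:R = (\sum_c F c) * (\sum_c H c).
Proof.
move=> dF dH.
rewrite [RHS]mulr_suml; under [RHS]eq_bigr => c1 _ do rewrite mulr_sumr.
have e1 : forall c1 c2, F c1 * H c2 = F (mix T c1 c2) * H (mix T c1 c2).
  move=> c1 c2; congr (_ * _).
    by apply: dF => s hs; rewrite ffunE hs.
  by apply: dH => s; rewrite ffunE in_setC => /negbTE ->.
under eq_bigr => c1 _ do under eq_bigr => c2 _ do rewrite e1.
rewrite pair_big /=.
rewrite (reindex (fun p : cfg * cfg => (mix T p.1 p.2, mix T p.2 p.1))) /=; last first.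
  by apply: onW_bij; exists (fun p : cfg * cfg => (mix T p.1 p.2, mix T p.2 p.1)) => -[a b] /=; rewrite !mixK.
under [RHS]eq_bigr => p _ do rewrite mixK.
rewrite -(pair_big predT predT (fun a b => F a * H a)) /= mulr_suml.
apply: eq_bigr => c _; rewrite sumr_const mulr_natr.
by [].
Qed.

Lemma agreeU S1 S2 c c' : agree (S1 :|: S2) c c' = agree S1 c c' && agree S2 c c'.
Proof.
apply/forall_inP/andP => [H|[/forall_inP H1 /forall_inP H2] s].
  by split; apply/forall_inP => s hs; apply: H; rewrite inE hs ?orbT.
by rewrite inE => /orP [] hs; [apply: H1 | apply: H2].
Qed.

Lemma agree_dep (S D : {set Sys}) (c c1 c2 : cfg) : S \subset D ->
  (forall s, s \in D -> c1 s = c2 s) -> agree S c c1 = agree S c c2.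
Proof.
move=> SD h; apply/forall_inP/forall_inP => H s hs.
  by rewrite -(h s) ?H // (subsetP SD).
by rewrite (h s) ?H // (subsetP SD).
Qed.

Lemma Mg_factor (F G : cfg -> R) (T W S1 S2 : {set Sys}) c :
  dep T F -> dep (~: T :|: W) G -> W \subset S1 -> S1 \subset T -> S2 \subset ~: T ->
  Mg (fun c => F c * G c) (S1 :|: S2) c * #|{: cfg}|%:R =
  (\sum_c' (agree S1 c c')%:R * F c') * (\sum_c' (agree S2 c c')%:R * G (mix T c c')).
Proof.
move=> dF dG WS1 S1T S2T.
rewrite /Mg -(sum_mix (T := T)); last first.
- move=> c1 c2 h; rewrite (agree_dep _ S2T h); congr (_ * _).
  by congr (G _); apply/ffunP => s; rewrite !ffunE; case: ifP => // hT; apply: h; rewrite inE hT.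
- move=> c1 c2 h; rewrite (agree_dep _ S1T h); congr (_ * _).
  by apply: dF.
congr (_ * _); apply: eq_bigr => c' _.
rewrite agreeU; case: (boolP (agree S1 c c')) => h1 /=; last by rewrite !mul0r.
rewrite mul1r mulrCA; congr (_ * (_ * _)).
apply: dG => s; rewrite !inE ffunE => /orP [hs|hs].
  by rewrite (negbTE hs).
case: ifP => // _; move/forall_inP: h1 => h1.
by apply/esym/eqP/h1; apply: (subsetP WS1).
Qed.

Lemma Mg_cmi (F G : cfg -> R) (T W X Y Z : {set Sys}) :
  dep T F -> dep (~: T :|: W) G -> W \subset Z -> X \subset T -> Z \subset T ->
  Y \subset ~: T ->
  forall c, Mg (fun c => F c * G c) Z c * Mg (fun c => F c * G c) (Y :|: (X :|: Z)) c =
     Mg (fun c => F c * G c) (Y :|: Z) c * Mg (fun c => F c * G c) (X :|: Z) c.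
Proof.
move=> dF dG WZ XT ZT YT c.
have K0 : (#|{: cfg}|%:R : R) != 0.
  by rewrite pnatr_eq0 -lt0n; apply/card_gt0P; exists c.
have WXZ : W \subset X :|: Z by apply: subset_trans WZ (subsetUr _ _).
have XZT : X :|: Z \subset T by rewrite subUset XT ZT.
have S0 : set0 \subset ~: T by rewrite sub0set.
have h1 := Mg_factor c dF dG WZ ZT S0.
have h2 := Mg_factor c dF dG WXZ XZT YT.
have h3 := Mg_factor c dF dG WZ ZT YT.
have h4 := Mg_factor c dF dG WXZ XZT S0.
rewrite setU0 in h1; rewrite setU0 in h4.
rewrite [Y :|: (X :|: Z)]setUC [Y :|: Z]setUC.
apply: (mulIf K0); apply: (mulIf K0).
have eq : forall a b k : R, a * b * k * k = (a * k) * (b * k) by move=> *; ring.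
rewrite !eq h1 h2 h3 h4.
ring.
Qed.

Lemma condMI_zero (psi : state R d Sys) (F G : cfg -> R) (T W X Y Z : {set Sys}) :
  (forall s, s \in X :|: Y :|: Z ->
     exists t, t \notin X :|: Y :|: Z /\ forall c, psi c != 0 -> c s = c t) ->
  (forall c, nn (psi c) = F c * G c) ->
  dep T F -> dep (~: T :|: W) G -> W \subset Z -> X \subset T -> Z \subset T ->
  Y \subset ~: T ->
  condMI psi X Y Z = 0.
Proof.
move=> tw hP dF dG WZ XT ZT YT.
have twS : forall S : {set Sys}, S \subset X :|: Y :|: Z ->
    forall s, s \in S -> exists t, t \notin S /\ forall c, psi c != 0 -> c s = c t.
  move=> S sub s hs; have [t [ht Ht]] := tw s (subsetP sub s hs).
  by exists t; split => //; apply: contra ht; apply: (subsetP sub).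
rewrite /condMI /condEnt !ent_classical; first last.
- by apply: twS; apply/subsetP => s; rewrite !inE; case: (s \in X); case: (s \in Y); case: (s \in Z).
- by apply: twS; apply/subsetP => s; rewrite !inE; case: (s \in X); case: (s \in Y); case: (s \in Z).
- by apply: twS; apply/subsetP => s; rewrite !inE; case: (s \in X); case: (s \in Y); case: (s \in Z).
- by apply: twS; apply/subsetP => s; rewrite !inE; case: (s \in X); case: (s \in Y); case: (s \in Z).
apply: cmi_classical; first by move=> c; apply: nn_ge0.
move=> c.
have eM : forall S, Mg (fun c => nn (psi c)) S c = Mg (fun c => F c * G c) S c.
  by move=> S; apply: eq_bigr => c' _; rewrite hP.
rewrite !eM; exact: Mg_cmi dF dG WZ XT ZT YT c.
Qed.
End PartB.

Section PartD.
Variable R : realType.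
Local Notation C := R[i].
Variables (d : nat) (hd : (0 < d)%N).
Local Notation z := (Ordinal hd).
Variables (K : finType) (q0 : K) (n' : nat).
Local Notation n := n'.+1.
Local Notation Sys := (K + ('I_n + 'I_n))%type.
Local Notation cfg := (cfg d Sys).
Local Notation Q := (inl q0 : Sys).
Local Notation A k := (inr (inl k) : Sys).
Local Notation D k := (inr (inr k) : Sys).
Variables (B : nat -> 'M[C]_d) (U : 'I_d -> 'M[C]_d) (V : 'M[C]_(d * d)).
Hypothesis hU : forall x a : 'I_d, U x a z = (a == x)%:R.
Hypothesis hV : forall x a b : 'I_d,
  V (mxvec_index a b) (mxvec_index x z) = ((a == x) && (b == x))%:R.
Variable phi : cfg -> C.
Hypothesis hphi : forall c c' : cfg, (forall r, c (inl r) = c' (inl r)) -> phi c = phi c'.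

Lemma updE (c : cfg) s v t : upd c s v t = if t == s then v else c t.
Proof. by rewrite /upd ffunE. Qed.

Definition xx (m : nat) (c : cfg) : 'I_d := c (D (inord m)).
Definition g0 (c : cfg) : C := \sum_(q : 'I_d) ((B 1 (xx 0 c) q)^* * phi (upd c Q q)).
Definition iota (m : nat) (y x : 'I_d) : C := \sum_(q : 'I_d) ((B m.+2 x q)^* * B m.+1 y q).
Definition Phi (k : nat) (c : cfg) : C :=
  if k is k'.+1 then B k (xx k' c) (c Q) * (g0 c * \prod_(m < k') iota m (xx m c) (xx m.+1 c))
  else phi c.
Definition Ind (k : nat) (c : cfg) : bool :=
  [forall m : 'I_n, if (m < k)%N then c (A m) == c (D m)
                    else (c (A m) == z) && (c (D m) == z)].
Definition pred_st (k : nat) (c : cfg) : C := (Ind k c)%:R * Phi k c.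

Definition step (psi : state R d Sys) (k : 'I_n) : state R d Sys :=
  apply2 (A k) (D k) (pairOp V) (apply2 Q (A k) (measOp (B k.+1) U) psi).

Lemma apply2_collapse (s1 s2 : Sys) (M : 'I_d -> 'I_d -> 'I_d -> 'I_d -> C)
  (psi : state R d Sys) (c : cfg) :
  (forall c'' : cfg, c'' s2 != z -> psi c'' = 0) ->
  apply2 s1 s2 M psi c = \sum_(a' : 'I_d) M (c s1) (c s2) a' z * psi (upd (upd c s1 a') s2 z).
Proof.
move=> h; apply: eq_bigr => a' _.
rewrite (bigD1 z) //= big1 ?addr0 // => b' hb.
by rewrite h ?mulr0 // updE eqxx.
Qed.


Lemma Ind_hi k (kk : 'I_n) c : (k <= kk)%N -> Ind k c ->
  (c (A kk) == z) && (c (D kk) == z).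
Proof. by move=> hk /forallP /(_ kk); rewrite ltnNge hk. Qed.

Lemma sum_pick (f : 'I_d -> C) (a : 'I_d) :
  \sum_(x : 'I_d) f x * (a == x)%:R = f a.
Proof.
rewrite (bigD1 a) //= eqxx mulr1 big1 ?addr0 // => x hx.
by rewrite eq_sym (negbTE hx) mulr0.
Qed.

Lemma meas_pred k (kk : 'I_n) (c : cfg) : val kk = k ->
  apply2 Q (A kk) (measOp (B kk.+1) U) (pred_st k) c =
  \sum_(a' : 'I_d) B k.+1 (c (A kk)) (c Q) * (B k.+1 (c (A kk)) a')^*
        * pred_st k (upd (upd c Q a') (A kk) z).
Proof.
move=> hk; rewrite apply2_collapse.
  apply: eq_bigr => a' _; congr (_ * _).
  by rewrite /measOp; under eq_bigr => x _ do rewrite hU; rewrite sum_pick hk.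
move=> c'' hc; rewrite /pred_st; case: (boolP (Ind k c'')) => hI; last by rewrite mul0r.
have hk' : (k <= kk)%N by rewrite hk.
by move: (Ind_hi hk' hI); rewrite (negbTE hc).
Qed.


Section StepCfg.
Variables (k : nat) (kk : 'I_n) (c : cfg) (a2 : 'I_d).
Hypothesis hk : val kk = k.
Let c2 := upd (upd (upd (upd c (A kk) (c (A kk))) (D kk) z) Q a2) (A kk) z.

Lemma c2E s : c2 s = if s == A kk then z else if s == Q then a2
                     else if s == D kk then z else c s.
Proof.
rewrite /c2 !updE; case: (s =P A kk) => //.
Qed.

Lemma Ind_step : c (A kk) = c (D kk) -> Ind k c2 = Ind k.+1 c.
Proof.
move=> hAD; rewrite /Ind; apply: eq_forallb => m.
rewrite !c2E /=.
case: (eqVneq m kk) => [->|ne].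
  by rewrite hk ltnn ltnSn !eqxx hAD eqxx.
have -> : (m < k.+1)%N = (m < k)%N.
  by rewrite ltnS leq_eqVlt -hk (val_eqE m kk) (negbTE ne).
have e1 : (A m == A kk) = (m == kk) by [].
have e2 : (D m == D kk) = (m == kk) by [].
by rewrite e1 e2 (negbTE ne).
Qed.

Lemma xx_c2 m : (m < k)%N -> xx m c2 = xx m c.
Proof.
move=> hm; rewrite /xx c2E /=.
have mn : (m < n)%N by rewrite (ltn_trans hm) // -hk ltn_ord.
have e : (D (inord m) == D kk) = (inord m == kk) by [].
rewrite e; case: eqP => // h.
by move: hm; rewrite -hk -h /= inordK // ltnn.
Qed.

Lemma phi_c2 q : phi (upd c2 Q q) = phi (upd c Q q).
Proof. by apply: hphi => r; rewrite !updE; case: (inl r =P Q). Qed.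

Lemma g0_c2 : (0 < k)%N -> g0 c2 = g0 c.
Proof.
move=> k0; rewrite /g0 xx_c2 //; apply: eq_bigr => q _.
by rewrite phi_c2.
Qed.

Lemma Phi_step : Phi k c2 = if k is k'.+1 then
    B k (xx k' c) a2 * (g0 c * \prod_(m < k') iota m (xx m c) (xx m.+1 c))
  else phi (upd c Q a2).
Proof.
rewrite /Phi; case E: k => [|k'].
  by apply: hphi => r; rewrite !updE; case: (inl r =P Q).
rewrite g0_c2 ?E // xx_c2 ?E // c2E /=.
rewrite eqxx; congr (_ * (_ * _)); apply: eq_bigr => m _.
have h1 : (m < k)%N by rewrite E ltnS ltnW.
have h2 : (m.+1 < k)%N by rewrite E ltnS.
by rewrite (xx_c2 h1) (xx_c2 h2).
Qed.

End StepCfg.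


Lemma step_pred k (kk : 'I_n) (c : cfg) : val kk = k ->
  step (pred_st k) kk c = pred_st k.+1 c.
Proof.
move=> hk; rewrite /step apply2_collapse; last first.
  move=> c'' hc; rewrite meas_pred //; apply: big1 => a' _.
  rewrite /pred_st; case: (boolP (Ind k _)) => hI; last by rewrite mul0r mulr0.
  have hk' : (k <= kk)%N by rewrite hk.
  by move: (Ind_hi hk' hI); rewrite !updE /= (negbTE hc) andbF.
rewrite /pairOp; under eq_bigr => a' _ do rewrite hV.
rewrite (bigD1 (c (A kk))) //= eqxx /= big1 ?addr0; last first.
  by move=> a' ha; rewrite eq_sym (negbTE ha) mul0r.
rewrite (eq_sym (c (D kk))) meas_pred // !updE /=.
case: (eqVneq (c (A kk)) (c (D kk))) => hAD; last first.
  rewrite mul0r /pred_st; case: (boolP (Ind k.+1 c)) => hI; last by rewrite mul0r.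
  by move/forallP: hI => /(_ kk); rewrite hk ltnSn (negbTE hAD).
rewrite mul1r.
under eq_bigr => a2 _ do rewrite /pred_st (Ind_step a2 hk hAD) (Phi_step c a2 hk).
have hx : xx k c = c (A kk) by rewrite hAD /xx -hk inord_val.
rewrite /pred_st /Phi -hx.
under eq_bigr => a2 _ do rewrite if_same mulrCA.
rewrite -mulr_sumr; congr (_ * _).
under eq_bigr => a2 _ do rewrite -mulrA.
rewrite -mulr_sumr; congr (_ * _).
destruct k as [|k'].
  by rewrite big_ord0 mulr1 /g0.
rewrite big_ord_recr /=.
transitivity ((\sum_a2 (B k'.+2 (xx k'.+1 c) a2)^* * B k'.+1 (xx k' c) a2) *
   (g0 c * \prod_(m < k') iota m (xx m c) (xx m.+1 c))).
  by rewrite mulr_suml; apply: eq_bigr => a2 _; ring.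
rewrite /iota; ring.
Qed.

Lemma step_ext (psi psi' : state R d Sys) kk c :
  (forall c, psi c = psi' c) -> step psi kk c = step psi' kk c.
Proof.
move=> h; rewrite /step /apply2; apply: eq_bigr => a _; apply: eq_bigr => b _.
congr (_ * _); apply: eq_bigr => a' _; apply: eq_bigr => b' _.
by rewrite h.
Qed.

Lemma evolve_pred (psi0 : state R d Sys) :
  (forall c, psi0 c = phi c * [forall k : 'I_n, (c (A k) == z) && (c (D k) == z)]%:R) ->
  forall c, evolve Q (fun k => A k) (fun k => D k) B U V psi0 c = pred_st n c.
Proof.
move=> h0.
have H : forall k, (k <= n)%N -> forall c,
    foldl step psi0 (take k (enum 'I_n)) c = pred_st k c.
  elim=> [|k IH] hk c.
    by rewrite take0 /= h0 /pred_st mulrC; congr (_%:R * _).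
  rewrite (take_nth ord0); last by rewrite size_enum_ord.
  rewrite foldl_rcons -(step_pred (kk := nth ord0 (enum 'I_n) k)); last by rewrite /= nth_enum_ord.
  by apply: step_ext => c'; apply: IH; apply: ltnW.
move=> c; rewrite -H //.
have -> : take n (enum 'I_n) = enum 'I_n.
  by rewrite take_oversize // size_enum_ord.
done.
Qed.

Lemma nnM (a b : C) : nn (a * b) = nn a * nn b.
Proof.
rewrite /nn rmorphM /=.
have -> : a * b * (a^* * b^*) = (a * a^*) * (b * b^*) by rewrite mulrACA.
have ha : complex.Im (a * a^*) = 0.
  by rewrite -normCK; apply: ger0_Im; rewrite exprn_ge0.
move: ha; case: (a * a^*) => x y /= ->; case: (b * b^*) => u v /=.
by rewrite mul0r subr0.
Qed.

Variables (i j : 'I_n).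
Hypothesis hij : (i.+2 <= j)%N.

Definition Tset : {set Sys} := [set s : Sys | match s with
  | inl r => r != q0 | inr (inl k) => (k < j)%N | inr (inr k) => (k < j)%N end].
Definition Wset : {set Sys} := [set D (inord j.-1)].
Definition Ilo (c : cfg) := [forall m : 'I_n, (m < j)%N ==> (c (A m) == c (D m))].
Definition Ihi (c : cfg) := [forall m : 'I_n, (j <= m)%N ==> (c (A m) == c (D m))].
Definition Flo (c : cfg) : C :=
  (Ilo c)%:R * (g0 c * \prod_(0 <= m < j.-1) iota m (xx m c) (xx m.+1 c)).
Definition Ghi (c : cfg) : C :=
  (Ihi c)%:R * (B n (xx n' c) (c Q) * \prod_(j.-1 <= m < n') iota m (xx m c) (xx m.+1 c)).

Lemma pred_split c : pred_st n c = Flo c * Ghi c.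
Proof.
have hI : Ind n c = Ilo c && Ihi c.
  apply/forallP/andP => [H|[/forallP H1 /forallP H2] m].
    split; apply/forallP => m; apply/implyP => _; by move: (H m); rewrite ltn_ord.
  rewrite ltn_ord; case: (ltnP m j) => hm.
    by move: (H1 m); rewrite hm.
  by move: (H2 m); rewrite hm.
have jn : (j.-1 <= n')%N by rewrite -ltnS (leq_ltn_trans (leq_pred _)) // ltn_ord.
rewrite /pred_st /Phi /Flo /Ghi hI -mulnb natrM.
rewrite -(big_mkord xpredT (fun m => iota m (xx m c) (xx m.+1 c))).
rewrite (big_cat_nat (leq0n j.-1) jn) /=.
ring.
Qed.


Lemma jn : (j < n)%N. Proof. exact: ltn_ord. Qed.

Lemma D_inT m : (m < j)%N -> D (inord m) \in Tset.
Proof. by move=> hm; rewrite inE /= inordK // (ltn_trans hm) // jn. Qed.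

Lemma dep_F : dep Tset (fun c => nn (Flo c)).
Proof.
move=> c c' h; congr nn.
have hx : forall m, (m < j)%N -> xx m c = xx m c'.
  by move=> m hm; rewrite /xx h // D_inT.
have e1 : Ilo c = Ilo c'.
  apply: eq_forallb => m; case: (ltnP m j) => hm //=.
  by rewrite !h // inE /= hm.
rewrite /Flo e1; congr (_ * (_ * _)).
- rewrite /g0 hx; last by rewrite (leq_trans _ hij).
  apply: eq_bigr => q _; congr (_ * _); apply: hphi => r; rewrite !updE.
  case: (inl r =P Q) => // ne; apply: h; rewrite inE /=.
  by apply/eqP => e; apply: ne; rewrite e.
- apply: eq_big_nat => m /andP [_ hm].
  rewrite !hx //; first by rewrite (leq_ltn_trans hm) // ltn_predL (leq_trans _ hij).
  by rewrite (ltn_trans hm) // ltn_predL (leq_trans _ hij).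
Qed.

Lemma dep_G : dep (~: Tset :|: Wset) (fun c => nn (Ghi c)).
Proof.
move=> c c' h; congr nn.
have hx : forall m, (j.-1 <= m)%N -> (m < n)%N -> xx m c = xx m c'.
  move=> m h1 h2; rewrite /xx h //.
  rewrite !inE /= inordK //.
  case: (ltnP m j) => hm /=; last by [].
  apply/eqP; congr (D _); apply: val_inj; rewrite /= !inordK //.
    by apply/eqP; rewrite eqn_leq h1 -ltnS (leq_trans hm) // leqSpred.
  by rewrite (leq_ltn_trans (leq_pred _)) // jn.
have e1 : Ihi c = Ihi c'.
  apply: eq_forallb => m; case: (leqP j m) => hm //=.
  by rewrite !h // !inE /= ltnNge hm.
rewrite /Ghi e1; congr (_ * (_ * _)).
- congr (B n _ _).
    rewrite hx //; rewrite -ltnS; exact: (leq_ltn_trans (leq_pred _) jn).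
  by rewrite h // !inE eqxx.
- apply: eq_big_nat => m /andP [h1 h2].
  by rewrite !hx // ?(leq_trans h1) // ltnS ltnW.
Qed.


Lemma cmi_generic (psi0 : state R d Sys) :
  (forall c, psi0 c = phi c * [forall k : 'I_n, (c (A k) == z) && (c (D k) == z)]%:R) ->
  condMI (evolve Q (fun k => A k) (fun k => D k) B U V psi0)
    [set D i] [set D j] [set D k | k : 'I_n & (i < k < j)%N] = 0.
Proof.
move=> h0.
have ij : (i < j)%N by rewrite (ltn_trans _ hij).
have j0 : (0 < j)%N by rewrite (leq_ltn_trans (leq0n _) ij).
have j1a : (i < j.-1)%N by rewrite -ltnS prednK.
have j1b : (j.-1 < j)%N by rewrite ltn_predL.
apply: (condMI_zero (F := fun c => nn (Flo c)) (G := fun c => nn (Ghi c))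
                    (T := Tset) (W := Wset)).
- move=> s; rewrite !inE => hs.
  have [k ->] : exists k, s = D k.
    case/orP: hs => [/orP [] /eqP -> | /imsetP [k _ ->]]; by eexists.
  exists (A k); split.
    by rewrite !inE /=; apply/negP => /imsetP [? _].
  move=> c; rewrite evolve_pred // /pred_st; case: (boolP (Ind n c)) => hI.
    by move=> _; move/forallP: hI => /(_ k); rewrite ltn_ord => /eqP.
  by rewrite mul0r eqxx.
- by move=> c; rewrite evolve_pred // pred_split nnM.
- exact: dep_F.
- exact: dep_G.
- apply/subsetP => s; rewrite !inE => /eqP ->.
  apply/imsetP; exists (inord j.-1) => //; rewrite inE inordK ?j1a ?j1b //.
  by rewrite (leq_ltn_trans (leq_pred _)) // jn.
- by apply/subsetP => s; rewrite !inE => /eqP -> /=.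
- by apply/subsetP => s /imsetP [k]; rewrite inE => /andP [_ hk] ->; rewrite inE /=.
- by apply/subsetP => s; rewrite !inE => /eqP -> /=; rewrite ltnn.
Qed.

End PartD.

Unset Implicit Arguments.
Set Strict Implicit.

Theorem corollary1 (R : realType) (d n : nat) (hd : (0 < d)%N)
  (B : nat -> 'M[R[i]]_d) (U : 'I_d -> 'M[R[i]]_d) (V : 'M[R[i]]_(d * d)) :
  (* B k : orthonormal basis {|x~_k>} (rows) measured by A_k, 1 <= k <= n *)
  (forall k, (1 <= k <= n)%N -> B k \is unitarymx) ->
  (* U_x unitary with U_x |0> = |x> *)
  (forall x : 'I_d, U x \is unitarymx) ->
  (forall x a : 'I_d, U x a (Ordinal hd) = (a == x)%:R) ->
  (* amplification unitary: |x>_A |0>_D -> |x>_A |x>_D *)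
  V \is unitarymx ->
  (forall x a b : 'I_d,
     V (mxvec_index a b) (mxvec_index x (Ordinal hd)) = ((a == x) && (b == x))%:R) ->
  forall i j : 'I_n, (i.+2 <= j)%N ->
    (forall alpha : 'I_d -> R[i], \sum_(x : 'I_d) `|alpha x| ^+ 2 = 1 ->
       condMI (@final_prepared R d n hd B U V alpha)
              [set DP i] [set DP j] [set DP k | k : 'I_n & (i < k < j)%N] = 0)
    /\
    condMI (@final_unprepared R d n hd B U V)
           [set DU i] [set DU j] [set DU k | k : 'I_n & (i < k < j)%N] = 0.
Proof.
move=> _ _ hU _ hV i j hij.
destruct n as [|n']; first by move: i hij => [m hm].
split.
  move=> alpha _.
  apply: (@cmi_generic R d hd unit tt n' B U V hU hV
            (fun c => \sum_(x : 'I_d) alpha x * B 1 x (c (inl tt)))).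
  - by move=> c c' h; apply: eq_bigr => x _; rewrite h.
  - exact: hij.
  - by move=> c.
apply: (@cmi_generic R d hd bool false n' B U V hU hV
          (fun c => (sqrtC (d%:R : R[i]))^-1 *
             \sum_(x : 'I_d) B 1 x (c (inl false)) * (c (inl true) == x)%:R)).
- by move=> c c' h; rewrite !h; congr (_ * _); apply: eq_bigr => x _; rewrite h.
- exact: hij.
- by move=> c.
Qed.
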